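(* Let $M,N,K$ be symmetric homogeneous bi-variate means having symmetric asymptotic expansions with coefficients $(a^M_n)$, $(a^N_n)$, $(a^K_n)$. Suppose $K$ and $M$ are stable and $N$ is $(K,M)$-stabilizable, i.e. $N(s,t)=K\big(N(s,M(s,t)),N(M(s,t),t)\big)$ for all $s,t>0$. Then $a^N_0=1$ and for $m\ge1$ $$a^N_m=\frac{2^{2m}}{2^{2m}-1}\Big[\frac12\sum_{n=0}^{m-1}a^N_n\sum_{k=0}^{2m-2n}P[k,2n,\mathbf g^M]P[2m-2n-k,-2n+1,\mathbf h^M]+\sum_{n=1}^ma^K_n\sum_{k=0}^{m-n}P[k,2n,\mathbf d]P[m-n-k,-2n+1,\mathbf s]\Big],$$ with $\mathbf d,\mathbf s$ defined by $d_m=-\frac12\sum_{n=0}^ma^N_n\sum_{k=0}^{2m+1-2n}P[k,2n,\mathbf g^M]P[2m+1-2n-k,-2n+1,\mathbf h^M]$ and $s_m=\frac12\sum_{n=0}^ma^N_n\sum_{k=0}^{2m-2n}P[k,2n,\mathbf g^M]P[2m-2n-k,-2n+1,\mathbf h^M]$. In particular $a^N_1=\frac13(a^K_1+2a^M_1)$.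
   Context: A bi-variate mean is $M:(0,\infty)^2\to(0,\infty)$ with $\min(s,t)\le M(s,t)\le\max(s,t)$; symmetric and homogeneous (degree 1) as usual. $M$ is stable if $M(s,t)=M\big(M(s,M(s,t)),M(M(s,t),t)\big)$. For two nontrivial stable means $K,M$, a mean $N$ is $(K,M)$-stabilizable if $N(s,t)=K\big(N(s,M(s,t)),N(M(s,t),t)\big)$ for all $s,t>0$. A mean has a symmetric asymptotic expansion with coefficients $(a_n)$ if for every fixed real $t$ and $N\ge0$, $M(x-t,x+t)=\sum_{n=0}^Na_nt^{2n}x^{-2n+1}+o(x^{-2N+1})$ as $x\to\infty$. For a sequence $\mathbf b$ with $b_0\ne0$, $r\in\mathbb R$: $P[0,r,\mathbf b]=b_0^r$, $P[n,r,\mathbf b]=\frac1{nb_0}\sum_{k=1}^n(k(1+r)-n)b_kP[n-k,r,\mathbf b]$ ($n\ge1$), i.e. the coefficient of $z^n$ in $(\sum_jb_jz^j)^r$. $\mathbf g^M=(1,a^M_1,0,a^M_2,0,\ldots)$ ($g_0=1$, $g_{2k-1}=a^M_k$, $g_{2k}=0$), $\mathbf h^M=(2,-1,a^M_1,0,a^M_2,0,\ldots)$ ($h_0=2$, $h_1=-1$, $h_{2k}=a^M_k$, $h_{2k+1}=0$), $k\ge1$. *)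

(* Defs.v *)
From Stdlib Require Import Reals ZArith Arith.
From Coquelicot Require Import Coquelicot.
Open Scope R_scope.

(** Bi-variate means on (0,oo)^2, represented as total functions R -> R -> R
    whose values are only constrained on positive arguments. *)
Definition is_mean (M : R -> R -> R) : Prop :=
  forall s t, 0 < s -> 0 < t -> Rmin s t <= M s t <= Rmax s t.

Definition is_symmetric (M : R -> R -> R) : Prop :=
  forall s t, 0 < s -> 0 < t -> M s t = M t s.

Definition is_homogeneous (M : R -> R -> R) : Prop :=
  forall l s t, 0 < l -> 0 < s -> 0 < t -> M (l * s) (l * t) = l * M s t.

Definition is_stable (M : R -> R -> R) : Prop :=
  forall s t, 0 < s -> 0 < t ->
    M s t = M (M s (M s t)) (M (M s t) t).

Definition is_stabilizable (K M N : R -> R -> R) : Prop :=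
  forall s t, 0 < s -> 0 < t ->
    N s t = K (N s (M s t)) (N (M s t) t).

Definition has_sym_asymp_exp (M : R -> R -> R) (a : nat -> R) : Prop :=
  forall (t : R) (N : nat),
    is_lim
      (fun x => (M (x - t) (x + t)
                 - sum_f_R0 (fun n => a n * t ^ (2 * n)
                                      * powerRZ x (1 - 2 * Z.of_nat n)%Z) N)
                / powerRZ x (1 - 2 * Z.of_nat N)%Z)
      p_infty (Finite 0).

(** P[n,r,b]: P[0] = b_0^r,
    P[n] = 1/(n b_0) * sum_{k=1}^n (k(1+r)-n) b_k P[n-k]  (n >= 1).
    Only integer exponents r occur in the theorem, so r : Z (b_0^r = powerRZ). *)
Fixpoint Paux (fuel : nat) (n : nat) (r : Z) (b : nat -> R) : R :=
  match fuel with
  | O => powerRZ (b O) r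
  | S f =>
      match n with
      | O => powerRZ (b O) r
      | S n' =>
          / (INR n * b O) *
          sum_f_R0 (fun j => (INR (S j) * (1 + IZR r) - INR n) * b (S j)
                             * Paux f (n - S j) r b) n'
      end
  end.

Definition P (n : nat) (r : Z) (b : nat -> R) : R := Paux n n r b.

(** g^M = (1, a_1, 0, a_2, 0, ...) *)
Definition gseq (a : nat -> R) (n : nat) : R :=
  match n with
  | O => 1
  | _ => if Nat.odd n then a (S n / 2)%nat else 0
  end.

(** h^M = (2, -1, a_1, 0, a_2, 0, ...) *)
Definition hseq (a : nat -> R) (n : nat) : R :=
  match n with
  | O => 2
  | 1%nat => -1
  | _ => if Nat.even n then a (n / 2)%nat else 0
  end.

Definition inner (aM aN : nat -> R) (m L : nat) : R :=
  sum_f_R0 (fun n => aN n *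
     sum_f_R0 (fun k => P k (2 * Z.of_nat n)%Z (gseq aM)
                        * P (L - 2 * n - k) (1 - 2 * Z.of_nat n)%Z (hseq aM))
              (L - 2 * n)) m.

Definition dseq (aM aN : nat -> R) (m : nat) : R :=
  - / 2 * inner aM aN m (2 * m + 1).

Definition sseq (aM aN : nat -> R) (m : nat) : R :=
  / 2 * inner aM aN m (2 * m).

(* Main.v *)
Require Import Defs.
From Stdlib Require Import Reals ZArith Arith Lra Lia Psatz.
From Coquelicot Require Import Coquelicot.
Open Scope R_scope.

Definition ps (c : nat -> R) (n : nat) (z : R) : R :=
  sum_f_R0 (fun k => c k * z ^ k) n.

Definition ex (dom : R -> Prop) (f : R -> R) (c : nat -> R) (n : nat) : Prop :=
  forall eps, 0 < eps -> exists del, 0 < del /\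
    forall z, dom z -> z <> 0 -> Rabs z < del ->
      Rabs (f z - ps c n z) <= eps * Rabs z ^ n.

Definition shift (c : nat -> R) (k : nat) : R := c (S k).

Lemma ps_S0 c n z : ps c (S n) z = c 0%nat + z * ps (shift c) n z.
Proof.
  unfold ps, shift. rewrite decomp_sum by lia. simpl pred.
  rewrite scal_sum. f_equal. simpl; ring. apply sum_eq; intros; simpl; ring.
Qed.

Lemma ps_0 c z : ps c 0 z = c 0%nat.
Proof. unfold ps; simpl; ring. Qed.

Lemma ex_shift dom f c n :
  ex dom f c (S n) <-> ex dom (fun z => (f z - c 0%nat) / z) (shift c) n.
Proof.
  split; intros H eps Heps; destruct (H eps Heps) as [d [Hd Hz]];
    exists d; split; auto; intros z Sz z0 zd; specialize (Hz z Sz z0 zd).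
  - replace ((f z - c 0%nat) / z - ps (shift c) n z)
      with ((f z - ps c (S n) z) / z) by (rewrite ps_S0; field; auto).
    unfold Rdiv; rewrite Rabs_mult, Rabs_inv.
    apply Rmult_le_reg_r with (Rabs z). apply Rabs_pos_lt; auto.
    rewrite Rmult_assoc, Rinv_l. 2: apply Rabs_no_R0; auto.
    simpl in Hz. lra.
  - replace (f z - ps c (S n) z) with (((f z - c 0%nat) / z - ps (shift c) n z) * z)
      by (rewrite ps_S0; field; auto).
    rewrite Rabs_mult. simpl. 
    apply Rle_trans with (eps * Rabs z ^ n * Rabs z).
    apply Rmult_le_compat_r; auto using Rabs_pos. lra.
Qed.

Lemma ex0 dom f c :
  ex dom f c 0 <-> (forall eps, 0 < eps -> exists del, 0 < del /\
    forall z, dom z -> z <> 0 -> Rabs z < del -> Rabs (f z - c 0%nat) <= eps).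
Proof.
  unfold ex; split; intros H eps Heps; destruct (H eps Heps) as [d [Hd Hz]];
    exists d; split; auto; intros z Sz z0 zd; specialize (Hz z Sz z0 zd);
    rewrite ps_0 in *; simpl in *; lra.
Qed.

Lemma ex_bound0 dom f c : ex dom f c 0 ->
  exists d B, 0 < d /\ forall z, dom z -> z <> 0 -> Rabs z < d -> Rabs (f z) <= B.
Proof.
  intros H0. pose proof (proj1 (ex0 dom f c) H0) as H. destruct (H 1 Rlt_0_1) as [d [Hd Hz]].
  exists d, (Rabs (c 0%nat) + 1). split; auto. intros z Sz z0 zd.
  specialize (Hz z Sz z0 zd).
  pose proof (Rabs_triang_inv (f z) (c 0%nat)). lra.
Qed.

Lemma ex_mono dom f c n : ex dom f c (S n) -> ex dom f c n.
Proof.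
  revert f c; induction n; intros f c H.
  - apply ex0. apply ex_shift in H. destruct (ex_bound0 _ _ _ H) as [d [B [Hd Hb]]].
    intros eps Heps. exists (Rmin d (eps / (Rabs B + 1))). split.
    { apply Rmin_pos; auto. apply Rdiv_lt_0_compat; auto. pose proof (Rabs_pos B); lra. }
    intros z Sz z0 zd. assert (zd1 : Rabs z < d) by (eapply Rlt_le_trans; [exact zd| apply Rmin_l]).
    assert (zd2 : Rabs z < eps / (Rabs B + 1)) by (eapply Rlt_le_trans; [exact zd| apply Rmin_r]).
    specialize (Hb z Sz z0 zd1).
    replace (f z - c 0%nat) with (z * ((f z - c 0%nat) / z)) by (field; auto).
    rewrite Rabs_mult.
    assert (HB : Rabs ((f z - c 0%nat) / z) <= Rabs B + 1).
    { pose proof (Rle_abs B). lra. }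
    apply Rle_trans with (Rabs z * (Rabs B + 1)).
    apply Rmult_le_compat_l; auto using Rabs_pos.
    apply Rlt_le. apply Rmult_lt_reg_r with (/ (Rabs B + 1)).
    apply Rinv_0_lt_compat; pose proof (Rabs_pos B); lra.
    rewrite Rmult_assoc, Rinv_r by (pose proof (Rabs_pos B); lra). rewrite Rmult_1_r. exact zd2.
  - apply ex_shift. apply ex_shift in H. apply IHn. exact H.
Qed.

Lemma ex_le dom f c n m : (n <= m)%nat -> ex dom f c m -> ex dom f c n.
Proof. intros Hle; induction Hle; auto. intros H; apply IHHle, ex_mono, H. Qed.

Lemma ex_bound dom f c n : ex dom f c n ->
  exists d B, 0 < d /\ forall z, dom z -> z <> 0 -> Rabs z < d -> Rabs (f z) <= B.
Proof. intros H. apply (ex_bound0 dom f c). apply (ex_le dom f c 0 n); auto; lia. Qed.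

Lemma ex_ext dom f g c n :
  (exists d, 0 < d /\ forall z, dom z -> z <> 0 -> Rabs z < d -> f z = g z) ->
  ex dom f c n -> ex dom g c n.
Proof.
  intros [d [Hd Hfg]] H eps Heps. destruct (H eps Heps) as [d2 [Hd2 Hz]].
  exists (Rmin d d2). split. apply Rmin_pos; auto.
  intros z Sz z0 zd. rewrite <- Hfg; auto.
  apply Hz; auto. eapply Rlt_le_trans; [exact zd| apply Rmin_r].
  eapply Rlt_le_trans; [exact zd| apply Rmin_l].
Qed.

Lemma ex_ext_all dom f g c n :
  (forall z, z <> 0 -> f z = g z) -> ex dom f c n -> ex dom g c n.
Proof. intros H; apply ex_ext. exists 1; split; [lra|]. intros; auto. Qed.

Lemma ps_ext c d n z : (forall k, (k <= n)%nat -> c k = d k) -> ps c n z = ps d n z.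
Proof. intros H; unfold ps; apply sum_eq; intros; rewrite H; auto. Qed.

Lemma ex_cext dom f c d n : (forall k, (k <= n)%nat -> c k = d k) ->
  ex dom f c n -> ex dom f d n.
Proof.
  intros Hcd H eps Heps. destruct (H eps Heps) as [d2 [Hd2 Hz]]. exists d2; split; auto.
  intros; rewrite <- (ps_ext c d n z Hcd); auto.
Qed.

Lemma ps_plus a b n z : ps (fun k => a k + b k) n z = ps a n z + ps b n z.
Proof. unfold ps. rewrite <- plus_sum. apply sum_eq; intros; ring. Qed.

Lemma ps_scal l a n z : ps (fun k => l * a k) n z = l * ps a n z.
Proof. unfold ps. rewrite scal_sum. apply sum_eq; intros; ring. Qed.

Lemma ex_plus dom f g a b n : ex dom f a n -> ex dom g b n ->
  ex dom (fun z => f z + g z) (fun k => a k + b k) n.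
Proof.
  intros Hf Hg eps Heps.
  destruct (Hf (eps/2)) as [d1 [Hd1 H1]]; [lra|].
  destruct (Hg (eps/2)) as [d2 [Hd2 H2]]; [lra|].
  exists (Rmin d1 d2); split. apply Rmin_pos; auto.
  intros z Sz z0 zd. rewrite ps_plus.
  assert (Rabs z < d1) by (eapply Rlt_le_trans; [exact zd| apply Rmin_l]).
  assert (Rabs z < d2) by (eapply Rlt_le_trans; [exact zd| apply Rmin_r]).
  specialize (H1 z Sz z0 H). specialize (H2 z Sz z0 H0).
  replace (f z + g z - (ps a n z + ps b n z)) with ((f z - ps a n z) + (g z - ps b n z)) by ring.
  eapply Rle_trans. apply Rabs_triang. lra.
Qed.

Lemma ex_scal dom f a l n : ex dom f a n ->
  ex dom (fun z => l * f z) (fun k => l * a k) n.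
Proof.
  intros Hf eps Heps.
  destruct (Hf (eps/(Rabs l + 1))) as [d1 [Hd1 H1]].
  { apply Rdiv_lt_0_compat; auto. pose proof (Rabs_pos l); lra. }
  exists d1; split; auto. intros z Sz z0 zd. rewrite ps_scal.
  specialize (H1 z Sz z0 zd).
  replace (l * f z - l * ps a n z) with (l * (f z - ps a n z)) by ring.
  rewrite Rabs_mult.
  apply Rle_trans with (Rabs l * (eps / (Rabs l + 1) * Rabs z ^ n)).
  apply Rmult_le_compat_l; auto using Rabs_pos.
  assert (0 <= Rabs z ^ n) by (apply pow_le, Rabs_pos).
  assert (Rabs l / (Rabs l + 1) <= 1).
  { pose proof (Rabs_pos l). apply Rmult_le_reg_r with (Rabs l + 1). lra.
    unfold Rdiv; rewrite Rmult_assoc, Rinv_l; lra. }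
  replace (Rabs l * (eps / (Rabs l + 1) * Rabs z ^ n)) with
    ((Rabs l / (Rabs l + 1)) * (eps * Rabs z ^ n)) by (unfold Rdiv; ring).
  assert (0 <= eps * Rabs z ^ n) by (apply Rmult_le_pos; lra).
  pose proof (Rmult_le_compat_r _ _ _ H2 H0). lra.
Qed.

Definition cst (a : R) (k : nat) : R := match k with O => a | S _ => 0 end.

Lemma ps_cst a n z : ps (cst a) n z = a.
Proof. induction n. unfold ps; simpl; ring. unfold ps in *; simpl sum_f_R0. rewrite IHn. simpl; ring. Qed.

Lemma ex_const dom a n : ex dom (fun _ => a) (cst a) n.
Proof.
  intros eps Heps; exists 1; split; [lra|]. intros. rewrite ps_cst.
  replace (a - a) with 0 by ring. rewrite Rabs_R0. apply Rmult_le_pos. lra. apply pow_le, Rabs_pos.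
Qed.

Lemma ex_poly dom c n : ex dom (ps c n) c n.
Proof.
  intros eps Heps; exists 1; split; [lra|]. intros.
  replace (ps c n z - ps c n z) with 0 by ring. rewrite Rabs_R0. apply Rmult_le_pos. lra. apply pow_le, Rabs_pos.
Qed.

Definition conv (a b : nat -> R) (n : nat) : R :=
  sum_f_R0 (fun i => a i * b (n - i)%nat) n.

Lemma conv_0 a b : conv a b 0 = a 0%nat * b 0%nat.
Proof. reflexivity. Qed.

Lemma conv_S a b k : conv a b (S k) = conv a (shift b) k + a (S k) * b 0%nat.
Proof.
  unfold conv. rewrite tech5. rewrite Nat.sub_diag. f_equal.
  apply sum_eq; intros i Hi. unfold shift. replace (S k - i)%nat with (S (k - i)) by lia. reflexivity.
Qed.

Lemma lim_mult dom f g a b :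
  ex dom f a 0 -> ex dom g b 0 -> ex dom (fun z => f z * g z) (fun _ => a 0%nat * b 0%nat) 0.
Proof.
  intros Hf Hg. destruct (ex_bound0 _ _ _ Hf) as [d0 [B [Hd0 HB]]].
  pose proof (proj1 (ex0 _ _ _) Hf) as Hf'. pose proof (proj1 (ex0 _ _ _) Hg) as Hg'.
  apply ex0. intros eps Heps.
  set (e1 := eps / (Rabs B + Rabs (b 0%nat) + 1)).
  assert (He1 : 0 < e1). { unfold e1. apply Rdiv_lt_0_compat; auto. pose proof (Rabs_pos B); pose proof (Rabs_pos (b 0%nat)); lra. }
  destruct (Hf' e1 He1) as [d1 [Hd1 H1]]. destruct (Hg' e1 He1) as [d2 [Hd2 H2]].
  exists (Rmin d0 (Rmin d1 d2)). split. repeat apply Rmin_pos; auto.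
  intros z Sz z0 zd.
  assert (Rabs z < d0) by (eapply Rlt_le_trans; [exact zd| apply Rmin_l]).
  assert (Rabs z < d1) by (eapply Rlt_le_trans; [exact zd| eapply Rle_trans; [apply Rmin_r| apply Rmin_l]]).
  assert (Rabs z < d2) by (eapply Rlt_le_trans; [exact zd| eapply Rle_trans; [apply Rmin_r| apply Rmin_r]]).
  specialize (HB z Sz z0 H). specialize (H1 z Sz z0 H0). specialize (H2 z Sz z0 H3).
  replace (f z * g z - a 0%nat * b 0%nat) with (f z * (g z - b 0%nat) + b 0%nat * (f z - a 0%nat)) by ring.
  eapply Rle_trans. apply Rabs_triang. rewrite !Rabs_mult.
  apply Rle_trans with (Rabs B * e1 + Rabs (b 0%nat) * e1).
  apply Rplus_le_compat. apply Rmult_le_compat; auto using Rabs_pos.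
  pose proof (Rle_abs B); lra.
  apply Rmult_le_compat_l; auto using Rabs_pos.
  unfold e1. replace (Rabs B * (eps / (Rabs B + Rabs (b 0%nat) + 1)) + Rabs (b 0%nat) * (eps / (Rabs B + Rabs (b 0%nat) + 1)))
   with (eps * ((Rabs B + Rabs (b 0%nat)) / (Rabs B + Rabs (b 0%nat) + 1))) by (field; pose proof (Rabs_pos B); pose proof (Rabs_pos (b 0%nat)); lra).
  assert ((Rabs B + Rabs (b 0%nat)) / (Rabs B + Rabs (b 0%nat) + 1) <= 1).
  { pose proof (Rabs_pos B); pose proof (Rabs_pos (b 0%nat)).
    apply Rmult_le_reg_r with (Rabs B + Rabs (b 0%nat) + 1). lra.
    unfold Rdiv; rewrite Rmult_assoc, Rinv_l; lra. }
  pose proof (Rmult_le_compat_l eps _ _ (Rlt_le _ _ Heps) H4). lra.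
Qed.

Lemma ex_mult dom f g a b n : ex dom f a n -> ex dom g b n ->
  ex dom (fun z => f z * g z) (conv a b) n.
Proof.
  revert f g a b; induction n; intros f g a b Hf Hg.
  - pose proof (lim_mult _ _ _ _ _ Hf Hg) as H. eapply ex_cext; [|exact H].
    intros k Hk. replace k with 0%nat by lia. reflexivity.
  - apply ex_shift. apply ex_shift in Hg. pose proof (ex_shift dom f a n) as [Hs _].
    specialize (Hs Hf). apply ex_mono in Hf.
    pose proof (IHn _ _ _ _ Hf Hg) as H1.
    pose proof (ex_scal _ _ _ (b 0%nat) _ Hs) as H2.
    pose proof (ex_plus _ _ _ _ _ _ H1 H2) as H3.
    eapply ex_cext; [| eapply ex_ext_all; [| exact H3]].
    + intros k Hk. unfold shift at 3. rewrite conv_S. unfold shift; ring.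
    + intros z z0. simpl. rewrite conv_0. field. auto.
Qed.

Lemma lim_nonzero dom f a : ex dom f a 0 -> a 0%nat <> 0 ->
  exists d, 0 < d /\ forall z, dom z -> z <> 0 -> Rabs z < d -> Rabs (a 0%nat) / 2 <= Rabs (f z).
Proof.
  intros H Ha. pose proof (proj1 (ex0 _ _ _) H) as H'.
  destruct (H' (Rabs (a 0%nat) / 2)) as [d [Hd Hz]]. pose proof (Rabs_pos_lt _ Ha); lra.
  exists d; split; auto. intros z Sz z0 zd. specialize (Hz z Sz z0 zd).
  pose proof (Rabs_triang_inv (a 0%nat) (f z)). rewrite Rabs_minus_sym in Hz. lra.
Qed.

Lemma ex_div dom f g a c n : ex dom f a n -> a 0%nat <> 0 ->
  ex dom (fun z => f z * g z) (conv a c) n -> ex dom g c n.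
Proof.
  revert g c; induction n; intros g c Hf Ha Hfg.
  - apply ex0. intros eps Heps.
    destruct (lim_nonzero _ _ _ Hf Ha) as [d0 [Hd0 H0]].
    pose proof (proj1 (ex0 _ _ _) Hf) as Hf'. pose proof (proj1 (ex0 _ _ _) Hfg) as Hg'.
    set (A := Rabs (a 0%nat)). assert (HA : 0 < A) by (apply Rabs_pos_lt; auto).
    set (e1 := eps * A / 2 / (Rabs (c 0%nat) + 1)).
    assert (He1 : 0 < e1). { unfold e1. apply Rdiv_lt_0_compat. apply Rdiv_lt_0_compat. nra. lra. pose proof (Rabs_pos (c 0%nat)); lra. }
    destruct (Hf' e1 He1) as [d1 [Hd1 H1]]. destruct (Hg' e1 He1) as [d2 [Hd2 H2]].
    exists (Rmin d0 (Rmin d1 d2)). split. repeat apply Rmin_pos; auto.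
    intros z Sz z0 zd.
    assert (Rabs z < d0) by (eapply Rlt_le_trans; [exact zd| apply Rmin_l]).
    assert (Rabs z < d1) by (eapply Rlt_le_trans; [exact zd| eapply Rle_trans; [apply Rmin_r| apply Rmin_l]]).
    assert (Rabs z < d2) by (eapply Rlt_le_trans; [exact zd| eapply Rle_trans; [apply Rmin_r| apply Rmin_r]]).
    specialize (H0 z Sz z0 H). specialize (H1 z Sz z0 H3). specialize (H2 z Sz z0 H4).
    rewrite conv_0 in H2. fold A in H0.
    assert (fz0 : f z <> 0). { intro E; rewrite E, Rabs_R0 in H0; lra. }
    replace (g z - c 0%nat) with (((f z * g z - a 0%nat * c 0%nat) - c 0%nat * (f z - a 0%nat)) / f z) by (field; auto).
    unfold Rdiv; rewrite Rabs_mult, Rabs_inv.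
    apply Rmult_le_reg_r with (Rabs (f z)). apply Rabs_pos_lt; auto.
    rewrite Rmult_assoc, Rinv_l, Rmult_1_r by (apply Rabs_no_R0; auto).
    eapply Rle_trans. apply Rabs_triang. rewrite Rabs_Ropp, Rabs_mult.
    apply Rle_trans with (e1 + Rabs (c 0%nat) * e1).
    apply Rplus_le_compat; auto. apply Rmult_le_compat_l; auto using Rabs_pos.
    apply Rle_trans with (eps * (A / 2)).
    2: apply Rmult_le_compat_l; lra.
    unfold e1. replace (eps * A / 2 / (Rabs (c 0%nat) + 1) + Rabs (c 0%nat) * (eps * A / 2 / (Rabs (c 0%nat) + 1)))
      with (eps * (A / 2)) by (field; pose proof (Rabs_pos (c 0%nat)); lra). lra.
  - apply ex_shift. pose proof (ex_shift dom f a n) as [Hs _]. specialize (Hs Hf).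
    apply ex_shift in Hfg. apply ex_mono in Hf.
    apply (IHn _ _ Hf Ha).
    pose proof (ex_scal _ _ _ (- c 0%nat) _ Hs) as H2.
    pose proof (ex_plus _ _ _ _ _ _ Hfg H2) as H3.
    eapply ex_cext; [| eapply ex_ext_all; [| exact H3]].
    + intros k Hk. unfold shift at 1. rewrite conv_S. unfold shift; ring.
    + intros z z0. simpl. rewrite conv_0. field. auto.
Qed.

Definition dense0 (dom : R -> Prop) := forall d, 0 < d -> exists z, dom z /\ z <> 0 /\ Rabs z < d.

Lemma ex_unique dom f c d n : dense0 dom -> ex dom f c n -> ex dom f d n ->
  forall k, (k <= n)%nat -> c k = d k.
Proof.
  intros Hd. revert f c d; induction n; intros f c d Hc Hdd.
  - intros k Hk. replace k with 0%nat by lia.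
    pose proof (proj1 (ex0 _ _ _) Hc) as H1. pose proof (proj1 (ex0 _ _ _) Hdd) as H2.
    destruct (Req_dec (c 0%nat) (d 0%nat)) as [E|E]; auto. exfalso.
    set (e := Rabs (c 0%nat - d 0%nat) / 3).
    assert (He : 0 < e). { unfold e. apply Rdiv_lt_0_compat; [|lra]. apply Rabs_pos_lt. lra. }
    destruct (H1 e He) as [d1 [Hd1 Z1]]. destruct (H2 e He) as [d2 [Hd2 Z2]].
    destruct (Hd (Rmin d1 d2)) as [z [Sz [z0 zd]]]. apply Rmin_pos; auto.
    assert (Rabs z < d1) by (eapply Rlt_le_trans; [exact zd| apply Rmin_l]).
    assert (Rabs z < d2) by (eapply Rlt_le_trans; [exact zd| apply Rmin_r]).
    specialize (Z1 z Sz z0 H). specialize (Z2 z Sz z0 H0).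
    pose proof (Rabs_triang (c 0%nat - f z) (f z - d 0%nat)).
    replace (c 0%nat - f z + (f z - d 0%nat)) with (c 0%nat - d 0%nat) in H3 by ring.
    rewrite Rabs_minus_sym in Z1. unfold e in *. lra.
  - assert (E0 : c 0%nat = d 0%nat).
    { apply (IHn f c d). apply ex_mono; auto. apply ex_mono; auto. lia. }
    apply ex_shift in Hc. apply ex_shift in Hdd. rewrite <- E0 in Hdd.
    pose proof (IHn _ _ _ Hc Hdd) as IH.
    intros k Hk. destruct k; auto. apply (IH k). lia.
Qed.

Definition mono (j k : nat) : R := if Nat.eqb k j then 1 else 0.

Lemma pow_abs_le z j : Rabs z <= 1 -> Rabs z ^ (S j) <= Rabs z.
Proof.
  intros H. induction j. simpl; lra.
  replace (Rabs z ^ S (S j)) with (Rabs z * Rabs z ^ (S j)) by (simpl; ring).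
  pose proof (Rabs_pos z). pose proof (pow_le (Rabs z) (S j) H0).
  apply Rle_trans with (1 * Rabs z ^ S j). apply Rmult_le_compat_r; auto. lra.
Qed.

Lemma ex_zero_fun dom n : ex dom (fun _ => 0) (fun _ => 0) n.
Proof. eapply ex_cext; [|apply ex_const]. intros k _. destruct k; reflexivity. Qed.

Lemma ex_monomial dom j n : ex dom (fun z => z ^ j) (mono j) n.
Proof.
  revert j; induction n; intros j.
  - apply ex0. intros eps Heps. exists (Rmin 1 eps); split. apply Rmin_pos; lra.
    intros z Sz z0 zd. unfold mono. destruct j; simpl Nat.eqb; cbv iota.
    + simpl. replace (1 - 1) with 0 by ring. rewrite Rabs_R0; lra.
    + rewrite Rminus_0_r, <- RPow_abs. eapply Rle_trans. apply pow_abs_le.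
      left; eapply Rlt_le_trans; [exact zd| apply Rmin_l].
      left; eapply Rlt_le_trans; [exact zd| apply Rmin_r].
  - apply ex_shift. destruct j.
    + eapply ex_cext; [| eapply ex_ext_all; [|apply (ex_zero_fun dom n)]].
      intros k _; reflexivity. intros z z0. unfold mono; simpl. field; auto.
    + eapply ex_cext; [| eapply ex_ext_all; [|apply (IHn j)]].
      intros k _; reflexivity. intros z z0. unfold mono; simpl. field; auto.
Qed.

Lemma sum_zero f n : (forall i, (i <= n)%nat -> f i = 0) -> sum_f_R0 f n = 0.
Proof. intros H. induction n; simpl. apply H; lia. rewrite IHn, H; try ring; intros; try apply H; lia. Qed.

Lemma sum_single f n j : (j <= n)%nat -> (forall i, (i <= n)%nat -> i <> j -> f i = 0) ->
  sum_f_R0 f n = f j.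
Proof.
  intros Hj H. induction n.
  - replace j with 0%nat by lia. reflexivity.
  - simpl. destruct (Nat.eq_dec j (S n)).
    + subst. rewrite sum_zero. ring. intros; apply H; lia.
    + rewrite IHn by (try lia; intros; apply H; lia). rewrite (H (S n)); auto; ring.
Qed.

Lemma conv_mono j x L : conv (mono j) x L = if Nat.leb j L then x (L - j)%nat else 0.
Proof.
  unfold conv. destruct (Nat.leb j L) eqn:E.
  - apply Nat.leb_le in E. rewrite (sum_single _ _ j E).
    unfold mono; rewrite Nat.eqb_refl; ring.
    intros i _ Hi. unfold mono. apply Nat.eqb_neq in Hi. rewrite Hi; ring.
  - apply sum_zero. intros i Hi. unfold mono.
    apply Nat.leb_gt in E. assert (i <> j) by lia. apply Nat.eqb_neq in H. rewrite H; ring.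
Qed.

Lemma ex_sum dom (F : nat -> R -> R) (c : nat -> nat -> R) N n :
  (forall j, (j <= N)%nat -> ex dom (F j) (c j) n) ->
  ex dom (fun z => sum_f_R0 (fun j => F j z) N) (fun k => sum_f_R0 (fun j => c j k) N) n.
Proof.
  intros H. induction N.
  - simpl. apply H; lia.
  - simpl. apply ex_plus. apply IHN; intros; apply H; lia. apply H; lia.
Qed.

Definition All (z : R) : Prop := True.
Lemma dense_All : dense0 All.
Proof. intros d Hd. exists (d/2). repeat split. lra. rewrite Rabs_pos_eq; lra. Qed.

Lemma conv_comm a b n : conv a b n = conv b a n.
Proof.
  apply (ex_unique All (fun z => ps a n z * ps b n z) _ _ n dense_All); auto.
  apply ex_mult; apply ex_poly.
  eapply ex_ext_all; [| apply ex_mult; apply ex_poly]. intros; simpl; ring.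
Qed.

Lemma conv_assoc a b c n : conv a (conv b c) n = conv (conv a b) c n.
Proof.
  apply (ex_unique All (fun z => ps a n z * (ps b n z * ps c n z)) _ _ n dense_All); auto.
  apply ex_mult. apply ex_poly. apply ex_mult; apply ex_poly.
  eapply ex_ext_all; [| apply ex_mult; [apply ex_mult; apply ex_poly| apply ex_poly]].
  intros; simpl; ring.
Qed.

Lemma conv_ext_r a b b' n : (forall k, (k <= n)%nat -> b k = b' k) -> conv a b n = conv a b' n.
Proof. intros H; unfold conv; apply sum_eq; intros; rewrite H; auto; lia. Qed.

Lemma conv_ext_l a a' b n : (forall k, (k <= n)%nat -> a k = a' k) -> conv a b n = conv a' b n.
Proof. intros H; unfold conv; apply sum_eq; intros; rewrite H; auto. Qed.

Lemma conv_lin_r a b c l n : conv a (fun k => l * b k + c k) n = l * conv a b n + conv a c n.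
Proof. unfold conv. rewrite scal_sum, <- plus_sum. apply sum_eq; intros; ring. Qed.

Lemma conv_scal_r a b l n : conv a (fun k => l * b k) n = l * conv a b n.
Proof. unfold conv. rewrite scal_sum. apply sum_eq; intros; ring. Qed.

Definition Dv (c : nat -> R) (k : nat) : R := INR k * c k.

Lemma leibniz a b n : Dv (conv a b) n = conv (Dv a) b n + conv a (Dv b) n.
Proof.
  unfold Dv, conv. rewrite scal_sum, <- plus_sum. apply sum_eq; intros i Hi.
  rewrite minus_INR by lia. ring.
Qed.


Lemma Paux_fuel m : forall f1 f2 r b, (m <= f1)%nat -> (m <= f2)%nat ->
  Paux f1 m r b = Paux f2 m r b.
Proof.
  induction m as [m IH] using lt_wf_ind. intros f1 f2 r b H1 H2.
  destruct m.
  - destruct f1, f2; reflexivity.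
  - destruct f1 as [|f1]; [lia|]. destruct f2 as [|f2]; [lia|].
    change (Paux (S f1) (S m) r b) with (/ (INR (S m) * b 0%nat) *
      sum_f_R0 (fun j => (INR (S j) * (1 + IZR r) - INR (S m)) * b (S j) * Paux f1 (S m - S j) r b) m).
    change (Paux (S f2) (S m) r b) with (/ (INR (S m) * b 0%nat) *
      sum_f_R0 (fun j => (INR (S j) * (1 + IZR r) - INR (S m)) * b (S j) * Paux f2 (S m - S j) r b) m).
    f_equal. apply sum_eq. intros j Hj. rewrite (IH (S m - S j)%nat) with (f2 := f2); auto; lia.
Qed.

Lemma P_rec n r b : P (S n) r b = / (INR (S n) * b 0%nat) *
  sum_f_R0 (fun j => (INR (S j) * (1 + IZR r) - INR (S n)) * b (S j) * P (S n - S j) r b) n.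
Proof.
  unfold P at 1.
  change (Paux (S n) (S n) r b) with (/ (INR (S n) * b 0%nat) *
      sum_f_R0 (fun j => (INR (S j) * (1 + IZR r) - INR (S n)) * b (S j) * Paux n (S n - S j) r b) n).
  f_equal. apply sum_eq. intros j Hj. unfold P. rewrite (Paux_fuel _ n (S n - S j)%nat); auto; lia.
Qed.

Lemma P_0 r b : P 0 r b = powerRZ (b 0%nat) r.
Proof. reflexivity. Qed.

Definition char (r : Z) (b Q : nat -> R) : Prop :=
  forall n, IZR r * conv (Dv b) Q n = conv b (Dv Q) n.

Lemma char_step r b Q n :
  IZR r * conv (Dv b) Q (S n) - conv b (Dv Q) (S n) =
  sum_f_R0 (fun j => (INR (S j) * (1 + IZR r) - INR (S n)) * b (S j) * Q (S n - S j)%nat) n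
  - INR (S n) * b 0%nat * Q (S n).
Proof.
  unfold conv, Dv. rewrite (decomp_sum _ (S n)) by lia. rewrite (decomp_sum _ (S n)) by lia.
  change (Init.Nat.pred (S n)) with n.
  rewrite !Nat.sub_0_r. rewrite Rmult_plus_distr_l, scal_sum.
  replace (sum_f_R0 (fun j => (INR (S j) * (1 + IZR r) - INR (S n)) * b (S j) * Q (S n - S j)%nat) n)
    with (sum_f_R0 (fun i => INR (S i) * b (S i) * Q (S n - S i)%nat * IZR r) n -
          sum_f_R0 (fun i => b (S i) * (INR (S n - S i) * Q (S n - S i)%nat)) n).
  2: { rewrite <- minus_sum. apply sum_eq. intros i Hi. rewrite minus_INR by lia. ring. }
  rewrite INR_0. ring.
Qed.

Lemma char_P r b : b 0%nat <> 0 -> char r b (fun k => P k r b).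
Proof.
  intros Hb n. destruct n.
  - unfold conv, Dv; simpl; ring.
  - pose proof (char_step r b (fun k => P k r b) n) as E.
    cbv beta in E. rewrite (P_rec n r b) in E.
    replace (INR (S n) * b 0%nat * (/ (INR (S n) * b 0%nat) *
        sum_f_R0 (fun j => (INR (S j) * (1 + IZR r) - INR (S n)) * b (S j) * P (S n - S j) r b) n))
      with (sum_f_R0 (fun j => (INR (S j) * (1 + IZR r) - INR (S n)) * b (S j) * P (S n - S j) r b) n) in E.
    lra. field. split; auto. apply not_0_INR; lia.
Qed.

Lemma char_unique r b Q Q' : b 0%nat <> 0 -> char r b Q -> char r b Q' -> Q 0%nat = Q' 0%nat ->
  forall n, Q n = Q' n.
Proof.
  intros Hb H H' H0.
  assert (forall n k, (k <= n)%nat -> Q k = Q' k).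
  { induction n; intros k Hk.
    - replace k with 0%nat by lia; auto.
    - destruct (Nat.eq_dec k (S n)); [subst|apply IHn; lia].
      pose proof (char_step r b Q n) as E. rewrite (H (S n)) in E.
      pose proof (char_step r b Q' n) as E'. rewrite (H' (S n)) in E'.
      rewrite (sum_eq _ (fun j => (INR (S j) * (1 + IZR r) - INR (S n)) * b (S j) * Q' (S n - S j)%nat)) in E.
      2: { intros j Hj. rewrite (IHn (S n - S j)%nat) by lia. reflexivity. }
      assert (INR (S n) * b 0%nat * (Q (S n) - Q' (S n)) = 0) by lra.
      apply Rmult_integral in H1. destruct H1 as [H1|H1]; [|lra].
      apply Rmult_integral in H1. destruct H1 as [H1|H1]; [|contradiction].
      exfalso; apply (not_0_INR (S n)); auto. }
  intros n; apply (H1 n n); lia.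
Qed.

Lemma P_zero_r b k : b 0%nat <> 0 -> P k 0 b = cst 1 k.
Proof.
  intros Hb. symmetry. apply (char_unique 0 b (cst 1) (fun k => P k 0 b)); auto.
  - intros n. rewrite Rmult_0_l. unfold conv. rewrite sum_zero; auto.
    intros i _. unfold Dv. destruct (n - i)%nat; simpl; ring.
  - apply char_P; auto.
Qed.

Lemma P_one_r b k : b 0%nat <> 0 -> P k 1 b = b k.
Proof.
  intros Hb. apply (char_unique 1 b (fun k => P k 1 b) b); auto.
  - apply char_P; auto.
  - intros n. rewrite Rmult_1_l. apply conv_comm.
  - rewrite P_0. simpl. ring.
Qed.

Lemma conv_scal_l a b l n : conv (fun k => l * a k) b n = l * conv a b n.
Proof. rewrite conv_comm, conv_scal_r, conv_comm. reflexivity. Qed.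

Lemma conv_P b r n : b 0%nat <> 0 -> conv b (fun k => P k r b) n = P n (r + 1) b.
Proof.
  intros Hb. revert n.
  apply (char_unique (r+1) b (conv b (fun k => P k r b)) (fun n => P n (r + 1) b)); auto.
  - intros n. rewrite plus_IZR.
    set (Pr := fun k => P k r b).
    rewrite (conv_ext_r b _ (fun k => (1 + IZR r) * conv (Dv b) Pr k)).
    2: { intros k _. rewrite leibniz. unfold Pr. rewrite <- (char_P r b Hb k). ring. }
    rewrite conv_scal_r.
    assert (E : conv b (conv (Dv b) Pr) n = conv (Dv b) (conv b Pr) n).
    { rewrite conv_assoc. rewrite (conv_ext_l _ (conv (Dv b) b)) by (intros; apply conv_comm).
      rewrite <- conv_assoc. reflexivity. }
    rewrite E. ring.
  - apply char_P; auto.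
  - rewrite conv_0, !P_0. rewrite powerRZ_add by auto. simpl. ring.
Qed.

Definition sc (s : R) (b : nat -> R) (k : nat) : R := s ^ k * b k.

Lemma conv_sc s a c n : conv (sc s a) (sc s c) n = s ^ n * conv a c n.
Proof.
  unfold conv, sc. rewrite scal_sum. apply sum_eq. intros i Hi.
  replace (s ^ n) with (s ^ i * s ^ (n - i)) by (rewrite <- pow_add; f_equal; lia). ring.
Qed.

Lemma P_sc s r b k : b 0%nat <> 0 -> P k r (sc s b) = s ^ k * P k r b.
Proof.
  intros Hb. revert k.
  assert (Hb' : sc s b 0%nat <> 0) by (unfold sc; simpl; rewrite Rmult_1_l; auto).
  apply (char_unique r (sc s b) (fun k => P k r (sc s b)) (sc s (fun k => P k r b))); auto.
  - apply char_P; auto.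
  - intros n. rewrite (conv_ext_l _ (sc s (Dv b))) by (intros; unfold Dv, sc; ring).
    rewrite (conv_ext_r (sc s b) _ (sc s (Dv (fun k => P k r b)))) by (intros; unfold Dv, sc; ring).
    rewrite !conv_sc. rewrite <- (char_P r b Hb n). ring.
  - unfold sc; rewrite !P_0. simpl. rewrite !Rmult_1_l. reflexivity.
Qed.

Definition spr (c : nat -> R) (k : nat) : R := if Nat.even k then c (k / 2)%nat else 0.

Lemma even_2j j : Nat.even (2 * j) = true.
Proof. induction j. reflexivity. replace (2 * S j)%nat with (S (S (2 * j))) by lia. simpl. auto. Qed.
Lemma even_2j1 j : Nat.even (2 * j + 1) = false.
Proof. induction j. reflexivity. replace (2 * S j + 1)%nat with (S (S (2 * j + 1))) by lia. simpl. auto. Qed.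
Lemma div_2j j : ((2 * j) / 2 = j)%nat.
Proof. rewrite Nat.mul_comm. apply Nat.div_mul. lia. Qed.

Lemma spr_even c j : spr c (2 * j) = c j.
Proof. unfold spr. rewrite even_2j, div_2j. reflexivity. Qed.
Lemma spr_odd c j : spr c (2 * j + 1) = 0.
Proof. unfold spr. rewrite even_2j1. reflexivity. Qed.

Lemma ps_spr c n z : ps (spr c) (2 * n) z = ps c n (z ^ 2).
Proof.
  induction n. unfold ps; simpl. reflexivity.
  replace (2 * S n)%nat with (S (S (2 * n))) by lia. unfold ps in *. rewrite tech5, tech5, (tech5 _ n).
  rewrite IHn. replace (S (2 * n)) with (2 * n + 1)%nat by lia. rewrite spr_odd.
  replace (S (2 * n + 1)) with (2 * S n)%nat by lia. rewrite spr_even.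
  rewrite <- pow_mult. replace (2 * S n)%nat with (S n * 2)%nat by lia. ring.
Qed.

Lemma ex_sq F e n : ex All F e n -> ex All (fun z => F (z ^ 2)) (spr e) (2 * n).
Proof.
  intros H eps Heps. destruct (H eps Heps) as [d [Hd Hz]].
  exists (Rmin 1 d). split. apply Rmin_pos; lra. intros z _ z0 zd.
  assert (z1 : Rabs z < 1) by (eapply Rlt_le_trans; [exact zd| apply Rmin_l]).
  assert (z2 : Rabs z < d) by (eapply Rlt_le_trans; [exact zd| apply Rmin_r]).
  rewrite ps_spr. 
  assert (Hz2 : Rabs (z ^ 2) < d).
  { rewrite <- RPow_abs. pose proof (pow_abs_le z 1 (Rlt_le _ _ z1)). lra. }
  specialize (Hz (z ^ 2) I (pow_nonzero z 2 z0) Hz2).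
  rewrite <- RPow_abs, <- pow_mult in Hz. exact Hz.
Qed.

Lemma conv_spr a c L : conv (spr a) (spr c) L = spr (conv a c) L.
Proof.
  apply (ex_unique All (fun z => ps (spr a) (2 * L) z * ps (spr c) (2 * L) z) _ _ (2 * L) dense_All).
  - apply ex_mult; apply ex_poly.
  - eapply ex_ext_all; [| apply ex_sq, ex_mult; apply (ex_poly All a L) || apply (ex_poly All c L)].
    intros z _. cbv beta. rewrite !ps_spr. reflexivity.
  - lia.
Qed.

Lemma Dv_spr c k : Dv (spr c) k = spr (fun j => 2 * Dv c j) k.
Proof.
  destruct (Nat.Even_or_Odd k) as [[j ->]|[j ->]].
  - unfold Dv. rewrite !spr_even. rewrite mult_INR. simpl (INR 2). ring.
  - unfold Dv. rewrite !spr_odd. ring.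
Qed.

Lemma P_spr r b k : b 0%nat <> 0 -> P k r (spr b) = spr (fun j => P j r b) k.
Proof.
  intros Hb. revert k.
  assert (Hb' : spr b 0%nat <> 0) by exact Hb.
  apply (char_unique r (spr b) (fun k => P k r (spr b)) (spr (fun j => P j r b))); auto.
  - apply char_P; auto.
  - intros n. rewrite (conv_ext_l _ (spr (fun j => 2 * Dv b j))) by (intros; apply Dv_spr).
    rewrite (conv_ext_r (spr b) _ (spr (fun j => 2 * Dv (fun j => P j r b) j))) by (intros; apply Dv_spr).
    rewrite !conv_spr.
    destruct (Nat.Even_or_Odd n) as [[j ->]|[j ->]].
    + rewrite !spr_even. rewrite conv_scal_l, conv_scal_r. rewrite <- (char_P r b Hb j). ring.
    + rewrite !spr_odd. ring.
Qed.

Lemma powerRZ_succ_nat x k : powerRZ x (Z.of_nat (S k)) = x * powerRZ x (Z.of_nat k).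
Proof. rewrite <- !pow_powerRZ. reflexivity. Qed.

Lemma powerRZ_neg_step x k : x <> 0 ->
  powerRZ x (- Z.of_nat k) = x * powerRZ x (- Z.of_nat (S k)).
Proof.
  intros Hx. replace (- Z.of_nat k)%Z with (1 + - Z.of_nat (S k))%Z by lia.
  rewrite powerRZ_add by auto. simpl (powerRZ x 1). ring.
Qed.

Lemma ex_pow dom f b n r : ex dom f b n -> b 0%nat <> 0 ->
  ex dom (fun z => powerRZ (f z) r) (fun k => P k r b) n.
Proof.
  intros Hf Hb.
  assert (H0 : ex dom (fun z => powerRZ (f z) 0) (fun k => P k 0 b) n).
  { eapply ex_cext; [| eapply ex_ext_all; [| apply (ex_const dom 1 n)]].
    intros k _. rewrite P_zero_r; auto. intros; reflexivity. }
  assert (Hpos : forall k, ex dom (fun z => powerRZ (f z) (Z.of_nat k)) (fun j => P j (Z.of_nat k) b) n).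
  { induction k; auto.
    eapply ex_cext; [| eapply ex_ext_all; [| apply (ex_mult _ _ _ _ _ _ Hf IHk)]].
    intros j _. rewrite conv_P by auto. f_equal. lia.
    intros z _. cbv beta. rewrite powerRZ_succ_nat. reflexivity. }
  assert (Hneg : forall k, ex dom (fun z => powerRZ (f z) (- Z.of_nat k)) (fun j => P j (- Z.of_nat k) b) n).
  { induction k; auto.
    apply (ex_div dom f _ b _ n Hf Hb).
    destruct (lim_nonzero dom f b) as [d [Hd Hnz]]; auto. apply (ex_le dom f b 0 n); auto; lia.
    eapply ex_cext; [| eapply ex_ext; [| exact IHk]].
    intros j _. rewrite conv_P by auto. f_equal. lia.
    exists d; split; auto. intros z Sz z0 zd. specialize (Hnz z Sz z0 zd).
    apply powerRZ_neg_step. intro E; rewrite E, Rabs_R0 in Hnz. pose proof (Rabs_pos_lt _ Hb). lra. }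
  destruct r as [|p|p].
  - exact H0.
  - rewrite <- positive_nat_Z. apply Hpos.
  - replace (Z.neg p) with (- Z.of_nat (Pos.to_nat p))%Z by (rewrite positive_nat_Z; reflexivity). apply Hneg.
Qed.


Lemma powerRZ_1m2 x j : x <> 0 -> powerRZ x (1 - 2 * Z.of_nat j) = x / x ^ (2 * j).
Proof.
  intros Hx. replace (1 - 2 * Z.of_nat j)%Z with (1 + - Z.of_nat (2 * j))%Z by lia.
  rewrite powerRZ_add, powerRZ_neg', <- pow_powerRZ by auto. simpl (powerRZ x 1).
  unfold Rdiv; ring.
Qed.

Lemma asymp_f X a : is_homogeneous X -> has_sym_asymp_exp X a ->
  forall N eps, 0 < eps -> exists d, 0 < d /\ forall w, 0 < w < d ->
    Rabs (X (1 - w) (1 + w) - sum_f_R0 (fun j => a j * w ^ (2 * j)) N) <= eps * w ^ (2 * N).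
Proof.
  intros Hh Ha N eps Heps.
  pose proof (proj2 (is_lim_spec _ _ _) (Ha 1 N)) as L.
  destruct (L (mkposreal eps Heps)) as [M HM].
  set (M1 := Rmax M 1 + 1).
  assert (HM1 : 1 < M1) by (unfold M1; pose proof (Rmax_r M 1); lra).
  exists (/ M1). split. apply Rinv_0_lt_compat; lra.
  intros w [w0 wd].
  set (x := / w).
  assert (xw : x * w = 1) by (unfold x; field; lra).
  assert (xM1 : M1 < x).
  { unfold x. apply Rmult_lt_reg_r with w; auto. rewrite Rinv_l by lra.
    apply Rmult_lt_reg_l with (/ M1). apply Rinv_0_lt_compat; lra.
    rewrite <- Rmult_assoc, Rinv_l, Rmult_1_l, Rmult_1_r by lra. exact wd. }
  assert (Mx : M < x) by (unfold M1 in xM1; pose proof (Rmax_l M 1); lra).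
  assert (x1 : 1 < x) by lra.
  specialize (HM x Mx). cbv beta in HM. cbn [pos] in HM.
  assert (w1 : w < 1) by (apply Rmult_lt_reg_l with x; lra).
  assert (EX : X (x - 1) (x + 1) = x * X (1 - w) (1 + w)).
  { rewrite <- Hh by lra. f_equal; [replace (x * (1 - w)) with (x - x * w) by ring | replace (x * (1 + w)) with (x + x * w) by ring]; lra. }
  rewrite EX in HM.
  rewrite (sum_eq _ (fun j => (a j * w ^ (2 * j)) * x)) in HM.
  2: { intros j _. rewrite powerRZ_1m2 by lra. rewrite pow1.
       unfold x. rewrite <- (Rinv_pow w) by lra. field. split; [lra|]. apply pow_nonzero; lra. }
  rewrite <- scal_sum in HM. rewrite powerRZ_1m2 in HM by lra.
  replace ((x * X (1 - w) (1 + w) - x * sum_f_R0 (fun j => a j * w ^ (2 * j)) N) / (x / x ^ (2 * N)) - 0)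
    with ((X (1 - w) (1 + w) - sum_f_R0 (fun j => a j * w ^ (2 * j)) N) / w ^ (2 * N)) in HM.
  2: { unfold x. rewrite <- (Rinv_pow w) by lra. field. split; [apply pow_nonzero|]; lra. }
  unfold Rdiv in HM. rewrite Rabs_mult, Rabs_inv in HM.
  rewrite (Rabs_pos_eq (w ^ (2 * N))) in HM by (apply pow_le; lra).
  assert (0 < w ^ (2 * N)) by (apply pow_lt; lra).
  apply Rlt_le. apply Rmult_lt_reg_r with (/ w ^ (2 * N)). apply Rinv_0_lt_compat; auto.
  rewrite Rmult_assoc, Rinv_r, Rmult_1_r by lra. exact HM.
Qed.

Lemma mean_11 X : is_mean X -> X 1 1 = 1.
Proof.
  intros Hm. destruct (Hm 1 1) as [H1 H2]; try lra.
  rewrite Rmin_left in H1 by lra. rewrite Rmax_left in H2 by lra. lra.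
Qed.

Lemma mean_near1 X w : is_mean X -> 0 < w < 1 -> Rabs (X (1 - w) (1 + w) - 1) <= w.
Proof.
  intros Hm Hw. destruct (Hm (1 - w) (1 + w)) as [H1 H2]; try lra.
  rewrite Rmin_left in H1 by lra. rewrite Rmax_right in H2 by lra.
  apply Rabs_le; lra.
Qed.

Lemma a0_one X a : is_mean X -> is_homogeneous X -> has_sym_asymp_exp X a -> a 0%nat = 1.
Proof.
  intros Hm Hh Ha. destruct (Req_dec (a 0%nat) 1) as [E|E]; auto. exfalso.
  set (e := Rabs (a 0%nat - 1) / 3).
  assert (He : 0 < e). { unfold e. apply Rdiv_lt_0_compat; [|lra]. apply Rabs_pos_lt. lra. }
  destruct (asymp_f X a Hh Ha 0 e He) as [d [Hd Hw]].
  set (w := Rmin (Rmin d e) (1/2) / 2).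
  assert (Hw0 : 0 < w) by (unfold w; apply Rdiv_lt_0_compat; [repeat apply Rmin_pos|]; lra).
  assert (Hw1 : w < d /\ w < e /\ w < 1).
  { unfold w. pose proof (Rmin_l (Rmin d e) (1/2)). pose proof (Rmin_r (Rmin d e) (1/2)).
    pose proof (Rmin_l d e). pose proof (Rmin_r d e). lra. }
  specialize (Hw w (conj Hw0 (proj1 Hw1))). simpl in Hw.
  pose proof (mean_near1 X w Hm (conj Hw0 (proj2 (proj2 Hw1)))).
  pose proof (Rabs_triang (a 0%nat - X (1 - w) (1 + w)) (X (1 - w) (1 + w) - 1)).
  replace (a 0%nat - X (1 - w) (1 + w) + (X (1 - w) (1 + w) - 1)) with (a 0%nat - 1) in H0 by ring.
  rewrite Rabs_minus_sym in Hw. unfold e in *. rewrite Rmult_1_r in Hw. lra.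
Qed.

Lemma sum_at0 a N : sum_f_R0 (fun j => a j * 0 ^ (2 * j)) N = a 0%nat.
Proof.
  rewrite (sum_single _ N 0). simpl; ring. lia.
  intros i _ Hi. destruct i. lia. replace (2 * S i)%nat with (S (2 * i + 1)) by lia. simpl; ring.
Qed.

Lemma asymp_f0 X a : is_mean X -> is_homogeneous X -> has_sym_asymp_exp X a ->
  forall N eps, 0 < eps -> exists d, 0 < d /\ forall w, 0 <= w < d ->
    Rabs (X (1 - w) (1 + w) - sum_f_R0 (fun j => a j * w ^ (2 * j)) N) <= eps * w ^ (2 * N).
Proof.
  intros Hm Hh Ha N eps Heps. destruct (asymp_f X a Hh Ha N eps Heps) as [d [Hd Hw]].
  exists d; split; auto. intros w [w0 wd]. destruct w0 as [w0|w0]; auto.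
  subst w. rewrite sum_at0, (a0_one X a Hm Hh Ha). replace (1 - 0) with 1 by ring.
  replace (1 + 0) with 1 by ring. rewrite mean_11 by auto. replace (1 - 1) with 0 by ring.
  rewrite Rabs_R0. apply Rmult_le_pos; [lra| apply pow_le; lra].
Qed.

Definition posz (z : R) : Prop := 0 < z.

Lemma ps_zero n z : ps (fun _ => 0) n z = 0.
Proof. unfold ps. apply sum_zero. intros; ring. Qed.

Lemma comp X a u v C ulo uhi d0 N :
  is_mean X -> is_symmetric X -> is_homogeneous X -> has_sym_asymp_exp X a ->
  0 < d0 -> 0 < ulo -> 0 <= C ->
  (forall z, 0 < z < d0 -> Rabs (v z) < u z /\ Rabs (v z) <= C * z /\ ulo <= u z /\ u z <= uhi) ->
  ex posz (fun z => X (u z - v z) (u z + v z) -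
     sum_f_R0 (fun j => a j * v z ^ (2 * j) * powerRZ (u z) (1 - 2 * Z.of_nat j)) N)
     (fun _ => 0) (2 * N).
Proof.
  intros Hm Hs Hh Ha Hd0 Hulo HC Huv eps Heps.
  set (K := Rabs uhi * (C / ulo) ^ (2 * N) + 1).
  assert (HK : 0 < K).
  { unfold K. pose proof (Rabs_pos uhi). assert (0 <= (C / ulo) ^ (2 * N)).
    apply pow_le. apply Rdiv_le_0_compat; lra. nra. }
  destruct (asymp_f0 X a Hm Hh Ha N (eps / K)) as [d1 [Hd1 Hw]].
  { apply Rdiv_lt_0_compat; auto. }
  exists (Rmin d0 (d1 * ulo / (C + 1))). split.
  { apply Rmin_pos; auto. apply Rdiv_lt_0_compat; nra. }
  intros z Hz z0 zd. unfold posz in Hz.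
  assert (zd0 : z < d0). { eapply Rle_lt_trans. apply Rle_abs. eapply Rlt_le_trans; [exact zd| apply Rmin_l]. }
  assert (zd1 : z < d1 * ulo / (C + 1)). { eapply Rle_lt_trans. apply Rle_abs. eapply Rlt_le_trans; [exact zd| apply Rmin_r]. }
  destruct (Huv z (conj Hz zd0)) as [Hvu [HvC [Hul Huh]]].
  set (uz := u z) in *. set (vz := v z) in *.
  assert (Hu0 : 0 < uz) by lra.
  set (w := Rabs vz / uz).
  assert (Hw0 : 0 <= w) by (unfold w; apply Rdiv_le_0_compat; [apply Rabs_pos|lra]).
  assert (Hw1 : w < 1).
  { unfold w. apply Rmult_lt_reg_r with uz; auto. unfold Rdiv. rewrite Rmult_assoc, Rinv_l; lra. }
  assert (HwC : w <= C * z / ulo).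
  { unfold w. unfold Rdiv. apply Rle_trans with (Rabs vz * / ulo).
    apply Rmult_le_compat_l. apply Rabs_pos. apply Rinv_le_contravar; auto.
    apply Rmult_le_compat_r. left; apply Rinv_0_lt_compat; auto. auto. }
  assert (Hwd : w < d1).
  { eapply Rle_lt_trans. exact HwC.
    apply Rmult_lt_reg_r with ((C + 1) / ulo). apply Rdiv_lt_0_compat; lra.
    replace (C * z / ulo * ((C + 1) / ulo)) with (z * (C * (C + 1)) / (ulo * ulo)) by (field; lra).
    apply Rle_lt_trans with (z * (C + 1) * (C + 1) / (ulo * ulo)).
    { unfold Rdiv. apply Rmult_le_compat_r. left; apply Rinv_0_lt_compat; nra. nra. }
    replace (d1 * ((C + 1) / ulo)) with (d1 * ulo / (C + 1) * (C + 1) * (C + 1) / (ulo * ulo)) by (field; lra).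
    unfold Rdiv. apply Rmult_lt_compat_r. apply Rinv_0_lt_compat; nra.
    apply Rmult_lt_compat_r; [lra|]. apply Rmult_lt_compat_r; [lra|]. exact zd1. }
  specialize (Hw w (conj Hw0 Hwd)).
  assert (Hvb : - uz < vz < uz) by (apply Rabs_def2 in Hvu; lra).
  assert (EX : X (uz - vz) (uz + vz) = uz * X (1 - w) (1 + w)).
  { destruct (Rle_or_lt 0 vz) as [hv|hv].
    - assert (Ew : w = vz / uz) by (unfold w; rewrite Rabs_pos_eq; auto).
      rewrite <- Hh by lra. f_equal; rewrite Ew; field; lra.
    - assert (Ew : w = - vz / uz) by (unfold w; rewrite Rabs_left; auto).
      rewrite Hs by lra.
      rewrite <- Hh by lra. f_equal; rewrite Ew; field; lra. }
  assert (ES : sum_f_R0 (fun j => a j * vz ^ (2 * j) * powerRZ uz (1 - 2 * Z.of_nat j)) N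
               = uz * sum_f_R0 (fun j => a j * w ^ (2 * j)) N).
  { rewrite scal_sum. apply sum_eq. intros j _. rewrite powerRZ_1m2 by lra. unfold w.
    unfold Rdiv. rewrite Rpow_mult_distr, pow_inv, !pow_mult, (RPow_abs vz 2), (Rabs_pos_eq (vz ^ 2)) by (apply pow2_ge_0). field. apply pow_nonzero. nra. }
  rewrite EX, ES, ps_zero, Rminus_0_r.
  replace (uz * X (1 - w) (1 + w) - uz * sum_f_R0 (fun j => a j * w ^ (2 * j)) N)
    with (uz * (X (1 - w) (1 + w) - sum_f_R0 (fun j => a j * w ^ (2 * j)) N)) by ring.
  rewrite Rabs_mult, (Rabs_pos_eq uz) by lra.
  rewrite (Rabs_pos_eq z) by lra.
  assert (Hwp : w ^ (2 * N) <= (C / ulo) ^ (2 * N) * z ^ (2 * N)).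
  { rewrite <- Rpow_mult_distr. apply pow_incr. split; auto. replace (C / ulo * z) with (C * z / ulo) by (field; lra). auto. }
  apply Rle_trans with (Rabs uhi * (eps / K * ((C / ulo) ^ (2 * N) * z ^ (2 * N)))).
  { apply Rmult_le_compat. lra. apply Rabs_pos. pose proof (Rle_abs uhi); lra.
    eapply Rle_trans. exact Hw. apply Rmult_le_compat_l; auto. left; apply Rdiv_lt_0_compat; auto. }
  assert (0 <= z ^ (2 * N)) by (apply pow_le; lra).
  replace (Rabs uhi * (eps / K * ((C / ulo) ^ (2 * N) * z ^ (2 * N))))
    with (eps * z ^ (2 * N) * ((Rabs uhi * (C / ulo) ^ (2 * N)) / K)) by (field; lra).
  assert (Rabs uhi * (C / ulo) ^ (2 * N) / K <= 1).
  { apply Rmult_le_reg_r with K; auto. unfold Rdiv. rewrite Rmult_assoc, Rinv_l by lra. rewrite Rmult_1_r, Rmult_1_l. unfold K. lra. }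
  assert (0 <= eps * z ^ (2 * N)) by (apply Rmult_le_pos; lra).
  pose proof (Rmult_le_compat_l _ _ _ H1 H0). lra.
Qed.


Lemma div2_spec L : (2 * (L / 2) <= L /\ L < 2 * (L / 2) + 2)%nat.
Proof. pose proof (Nat.div_mod L 2). pose proof (Nat.mod_upper_bound L 2). lia. Qed.

Lemma sum_trunc f n k : (k <= n)%nat -> (forall j, (k < j <= n)%nat -> f j = 0) ->
  sum_f_R0 f n = sum_f_R0 f k.
Proof.
  intros Hk H. induction Hk; auto. simpl. rewrite IHHk. rewrite (H (S m)). ring. lia.
  intros; apply H; lia.
Qed.

Lemma ex_f X a : is_mean X -> is_homogeneous X -> has_sym_asymp_exp X a ->
  forall n, ex posz (fun z => X (1 - z) (1 + z)) (spr a) n.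
Proof.
  intros Hm Hh Ha n. apply (ex_le _ _ _ n (2 * n)); [lia|].
  intros eps Heps. destruct (asymp_f X a Hh Ha n eps Heps) as [d [Hd Hw]].
  exists d; split; auto. intros z Hz z0 zd. unfold posz in Hz.
  rewrite Rabs_pos_eq in zd by lra. rewrite (Rabs_pos_eq z) by lra.
  rewrite ps_spr. unfold ps. 
  rewrite (sum_eq _ (fun j => a j * z ^ (2 * j))). apply Hw; lra.
  intros; rewrite pow_mult; reflexivity.
Qed.

Lemma sig_even s i : s * s = 1 -> s ^ (2 * i) = 1.
Proof. intros Hs. rewrite pow_mult. simpl. rewrite Rmult_1_r, Hs. apply pow1. Qed.

Lemma sig_odd s i : s * s = 1 -> s ^ (2 * i + 1) = s.
Proof. intros Hs. rewrite pow_add, sig_even by auto. simpl; ring. Qed.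

Lemma odd_S_even k : Nat.odd (S k) = Nat.even k.
Proof. apply Nat.odd_succ. Qed.

Lemma gseq_sc s aM k : s * s = 1 -> aM 0%nat = 1 ->
  cst 1 k + s * shift (spr aM) k = sc s (gseq aM) k.
Proof.
  intros Hs Ha. unfold sc, shift. destruct k.
  - simpl. unfold spr. simpl. ring.
  - unfold cst, gseq. rewrite odd_S_even. unfold spr. simpl Nat.even at 1.
    destruct (Nat.Even_or_Odd k) as [[i ->]|[i ->]].
    + rewrite even_2j. replace (S (2 * i)) with (2 * i + 1)%nat by lia. rewrite sig_odd by auto. ring.
    + rewrite even_2j1. ring.
Qed.

Lemma hseq_sc s aM k : s * s = 1 -> aM 0%nat = 1 ->
  cst 1 k + - s * mono 1 k + spr aM k = sc s (hseq aM) k.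
Proof.
  intros Hs Ha. unfold sc. destruct k as [|[|k]].
  - unfold cst, mono, spr, hseq. simpl. rewrite Ha. ring.
  - unfold cst, mono, spr, hseq. simpl. ring.
  - unfold cst, mono, hseq. simpl Nat.eqb. cbv iota. unfold spr.
    destruct (Nat.Even_or_Odd k) as [[i ->]|[i ->]].
    + replace (S (S (2 * i))) with (2 * S i)%nat by lia. rewrite even_2j, sig_even by auto. ring.
    + replace (S (S (2 * i + 1))) with (2 * S i + 1)%nat by lia. rewrite even_2j1. ring.
Qed.

Definition mf (M : R -> R -> R) (z : R) : R := M (1 - z) (1 + z).
Definition Gf M s z := 1 + s * ((mf M z - 1) / z).
Definition Hf M s z := 1 - s * z + mf M z.
Definition uf M s z := (1 - s * z + mf M z) / 2.
Definition vf M s z := (mf M z - 1 + s * z) / 2.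

Lemma mf_bound M z : is_mean M -> 0 < z < 1 -> 1 - z <= mf M z <= 1 + z.
Proof.
  intros Hm Hz. unfold mf. destruct (Hm (1 - z) (1 + z)) as [H1 H2]; try lra.
  rewrite Rmin_left in H1 by lra. rewrite Rmax_right in H2 by lra. lra.
Qed.

Lemma ex_G M aM s : is_mean M -> is_homogeneous M -> has_sym_asymp_exp M aM -> s * s = 1 ->
  forall n, ex posz (Gf M s) (sc s (gseq aM)) n.
Proof.
  intros Hm Hh Ha Hs n.
  pose proof (ex_f M aM Hm Hh Ha (S n)) as H. apply ex_shift in H.
  pose proof (ex_plus _ _ _ _ _ _ (ex_const posz 1 n) (ex_scal _ _ _ s _ H)) as H2.
  eapply ex_cext; [| eapply ex_ext_all; [| exact H2]].
  - intros k _. apply gseq_sc; auto. apply (a0_one M); auto.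
  - intros z _. unfold Gf, mf. cbv beta. unfold spr at 1. simpl Nat.even. cbv iota.
    change (0 / 2)%nat with 0%nat. rewrite (a0_one M aM) by auto. reflexivity.
Qed.

Lemma ex_H M aM s : is_mean M -> is_homogeneous M -> has_sym_asymp_exp M aM -> s * s = 1 ->
  forall n, ex posz (Hf M s) (sc s (hseq aM)) n.
Proof.
  intros Hm Hh Ha Hs n.
  pose proof (ex_plus _ _ _ _ _ _ (ex_plus _ _ _ _ _ _ (ex_const posz 1 n) (ex_scal _ _ _ (- s) _ (ex_monomial posz 1 n)))
     (ex_f M aM Hm Hh Ha n)) as H2.
  eapply ex_cext; [| eapply ex_ext_all; [| exact H2]].
  - intros k _. apply hseq_sc; auto. apply (a0_one M); auto.
  - intros z _. unfold Hf, mf. cbv beta. ring.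
Qed.

Lemma powerRZ_2j x j : powerRZ x (2 * Z.of_nat j) = x ^ (2 * j).
Proof. rewrite pow_powerRZ. f_equal. lia. Qed.

Lemma ex_T M aM s j : is_mean M -> is_homogeneous M -> has_sym_asymp_exp M aM -> s * s = 1 ->
  forall n, ex posz (fun z => vf M s z ^ (2 * j) * powerRZ (uf M s z) (1 - 2 * Z.of_nat j))
    (fun L => / 2 * conv (mono (2 * j)) (conv (fun k => P k (2 * Z.of_nat j) (sc s (gseq aM)))
                                              (fun k => P k (1 - 2 * Z.of_nat j) (sc s (hseq aM)))) L) n.
Proof.
  intros Hm Hh Ha Hs n.
  assert (Hg0 : sc s (gseq aM) 0%nat <> 0) by (unfold sc, gseq; simpl; lra).
  assert (Hh0 : sc s (hseq aM) 0%nat <> 0) by (unfold sc, hseq; simpl; lra).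
  pose proof (ex_pow _ _ _ n (2 * Z.of_nat j) (ex_G M aM s Hm Hh Ha Hs n) Hg0) as HG.
  pose proof (ex_pow _ _ _ n (1 - 2 * Z.of_nat j) (ex_H M aM s Hm Hh Ha Hs n) Hh0) as HH.
  pose proof (ex_scal _ _ _ (/ 2) _ (ex_mult _ _ _ _ _ _ (ex_monomial posz (2 * j) n) (ex_mult _ _ _ _ _ _ HG HH))) as H.
  eapply ex_ext; [| exact H].
  exists (1/2). split; [lra|]. intros z Hz z0 zd. unfold posz in Hz.
  rewrite Rabs_pos_eq in zd by lra.
  pose proof (mf_bound M z Hm (conj Hz (ltac:(lra) : z < 1))) as Hmb.
  assert (HH0 : 0 < Hf M s z).
  { unfold Hf. assert (s = 1 \/ s = -1) by (destruct (Rle_or_lt 0 s); nra). destruct H0; subst; lra. }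
  rewrite powerRZ_2j. rewrite !powerRZ_1m2 by (unfold uf; fold (Hf M s z); lra).
  replace (vf M s z) with (s * z * Gf M s z / 2) by (unfold vf, Gf; field_simplify; [nra|lra]).
  replace (uf M s z) with (Hf M s z / 2) by (unfold uf, Hf; reflexivity).
  unfold Rdiv. rewrite !Rpow_mult_distr, !pow_inv, (sig_even s j Hs).
  field. split; apply pow_nonzero; lra.
Qed.

Definition Af (N M : R -> R -> R) s z := N (uf M s z - vf M s z) (uf M s z + vf M s z).

Definition cT aM s j L := / 2 * conv (mono (2 * j)) (conv (fun k => P k (2 * Z.of_nat j) (sc s (gseq aM)))
                                              (fun k => P k (1 - 2 * Z.of_nat j) (sc s (hseq aM)))) L.
Definition cA aM aN s Om L := sum_f_R0 (fun j => aN j * cT aM s j L) Om.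

Lemma sig_cases s : s * s = 1 -> s = 1 \/ s = -1.
Proof. intros H. destruct (Rle_or_lt 0 s); [left|right]; nra. Qed.

Lemma ex_A M N aM aN s Om :
  is_mean M -> is_homogeneous M -> has_sym_asymp_exp M aM ->
  is_mean N -> is_symmetric N -> is_homogeneous N -> has_sym_asymp_exp N aN ->
  s * s = 1 -> ex posz (Af N M s) (cA aM aN s Om) Om.
Proof.
  intros HmM HhM HaM HmN HsN HhN HaN Hs.
  pose proof (comp N aN (uf M s) (vf M s) 1 (1/2) 2 (1/2) Om HmN HsN HhN HaN) as H1.
  assert (H1' : ex posz (fun z => N (uf M s z - vf M s z) (uf M s z + vf M s z) -
     sum_f_R0 (fun j => aN j * vf M s z ^ (2 * j) * powerRZ (uf M s z) (1 - 2 * Z.of_nat j)) Om)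
     (fun _ => 0) (2 * Om)).
  { apply H1; try lra. intros z Hz. pose proof (mf_bound M z HmM (conj (proj1 Hz) (ltac:(lra) : z < 1))).
    unfold uf, vf. destruct (sig_cases s Hs); subst s; repeat split; try (apply Rabs_def1); try (apply Rabs_le); lra. }
  pose proof (ex_sum posz (fun j z => aN j * vf M s z ^ (2 * j) * powerRZ (uf M s z) (1 - 2 * Z.of_nat j))
     (fun j L => aN j * cT aM s j L) Om (2 * Om)) as H2.
  assert (H2' := H2 (fun j _ => ex_ext_all _ _ _ _ _ (fun z _ => eq_sym (Rmult_assoc _ _ _))
      (ex_scal _ _ _ (aN j) _ (ex_T M aM s j HmM HhM HaM Hs (2 * Om))))).
  pose proof (ex_plus _ _ _ _ _ _ H1' H2') as H3.
  apply (ex_le _ _ _ Om (2 * Om)); [lia|].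
  eapply ex_cext; [| eapply ex_ext_all; [| exact H3]].
  - intros k _. unfold cA. simpl. ring.
  - intros z _. unfold Af. cbv beta. ring.
Qed.

Definition cT0 aM j L := / 2 * conv (mono (2 * j)) (conv (fun k => P k (2 * Z.of_nat j) (gseq aM))
                                              (fun k => P k (1 - 2 * Z.of_nat j) (hseq aM))) L.
Definition cA0 aM aN Om L := sum_f_R0 (fun j => aN j * cT0 aM j L) Om.

Lemma cT_sc aM s j L : s * s = 1 -> cT aM s j L = s ^ L * cT0 aM j L.
Proof.
  intros Hs. unfold cT, cT0. rewrite !conv_mono.
  destruct (Nat.leb (2 * j) L) eqn:E; [|ring].
  apply Nat.leb_le in E.
  rewrite (conv_ext_l _ (sc s (fun k => P k (2 * Z.of_nat j) (gseq aM)))).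
  2: { intros; apply P_sc. unfold gseq; lra. }
  rewrite (conv_ext_r _ _ (sc s (fun k => P k (1 - 2 * Z.of_nat j) (hseq aM)))).
  2: { intros; apply P_sc. unfold hseq; lra. }
  rewrite conv_sc.
  replace (s ^ L) with (s ^ (2 * j) * s ^ (L - 2 * j)) by (rewrite <- pow_add; f_equal; lia).
  rewrite sig_even by auto. ring.
Qed.

Lemma cA_sc aM aN s Om L : s * s = 1 -> cA aM aN s Om L = s ^ L * cA0 aM aN Om L.
Proof.
  intros Hs. unfold cA, cA0. rewrite scal_sum. apply sum_eq. intros j _. rewrite cT_sc by auto. ring.
Qed.

Lemma cA0_inner aM aN Om L : (L <= Om)%nat -> cA0 aM aN Om L = / 2 * inner aM aN (L / 2) L.
Proof.
  intros HL. pose proof (div2_spec L) as HD.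
  unfold cA0. rewrite (sum_trunc _ Om (L / 2)) by (try lia; intros j Hj; unfold cT0; rewrite conv_mono;
     replace (Nat.leb (2 * j) L) with false by (symmetry; apply Nat.leb_gt; lia); ring).
  unfold inner. rewrite scal_sum. apply sum_eq. intros j Hj. unfold cT0. rewrite conv_mono.
  replace (Nat.leb (2 * j) L) with true by (symmetry; apply Nat.leb_le; lia).
  unfold conv. ring.
Qed.

Definition Uf N M z := (Af N M 1 z + Af N M (-1) z) / 2.
Definition Vf N M z := (Af N M (-1) z - Af N M 1 z) / 2.

Lemma div_2j1 i : ((2 * i + 1) / 2 = i)%nat.
Proof. pose proof (div2_spec (2 * i + 1)). lia. Qed.

Lemma ex_U M N aM aN Om :
  is_mean M -> is_homogeneous M -> has_sym_asymp_exp M aM ->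
  is_mean N -> is_symmetric N -> is_homogeneous N -> has_sym_asymp_exp N aN ->
  ex posz (Uf N M) (spr (sseq aM aN)) Om.
Proof.
  intros HmM HhM HaM HmN HsN HhN HaN.
  pose proof (ex_scal _ _ _ (/2) _ (ex_plus _ _ _ _ _ _
    (ex_A M N aM aN 1 Om HmM HhM HaM HmN HsN HhN HaN ltac:(ring))
    (ex_A M N aM aN (-1) Om HmM HhM HaM HmN HsN HhN HaN ltac:(ring)))) as H.
  eapply ex_cext; [| eapply ex_ext_all; [| exact H]].
  - intros L HL. cbv beta. rewrite (cA_sc aM aN 1 Om L) by ring. rewrite (cA_sc aM aN (-1) Om L) by ring. rewrite pow1. rewrite cA0_inner by auto.
    destruct (Nat.Even_or_Odd L) as [[i ->]|[i ->]].
    + rewrite spr_even, div_2j. rewrite (sig_even (-1) i) by ring. unfold sseq. field.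
    + rewrite spr_odd. rewrite (sig_odd (-1) i) by ring. field.
  - intros z _. unfold Uf. cbv beta. field.
Qed.

Lemma ex_Vz M N aM aN n :
  is_mean M -> is_homogeneous M -> has_sym_asymp_exp M aM ->
  is_mean N -> is_symmetric N -> is_homogeneous N -> has_sym_asymp_exp N aN ->
  ex posz (fun z => Vf N M z / z) (spr (dseq aM aN)) n.
Proof.
  intros HmM HhM HaM HmN HsN HhN HaN.
  pose proof (ex_scal _ _ _ (/2) _ (ex_plus _ _ _ _ _ _
    (ex_A M N aM aN (-1) (S n) HmM HhM HaM HmN HsN HhN HaN ltac:(ring))
    (ex_scal _ _ _ (-1) _ (ex_A M N aM aN 1 (S n) HmM HhM HaM HmN HsN HhN HaN ltac:(ring))))) as H.
  apply ex_shift in H.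
  eapply ex_cext; [| eapply ex_ext_all; [| exact H]].
  - intros L HL. unfold shift. cbv beta. rewrite (cA_sc aM aN 1 _ (S L)) by ring. rewrite (cA_sc aM aN (-1) _ (S L)) by ring. rewrite pow1. rewrite cA0_inner by lia.
    destruct (Nat.Even_or_Odd L) as [[i ->]|[i ->]].
    + rewrite spr_even. replace (S (2 * i)) with (2 * i + 1)%nat by lia. rewrite div_2j1.
      rewrite (sig_odd (-1) i) by ring. unfold dseq. replace (2 * i + 1)%nat with (2 * i + 1)%nat by lia. field.
    + rewrite spr_odd. replace (S (2 * i + 1)) with (2 * (S i))%nat by lia.
      rewrite (sig_even (-1) (S i)) by ring. field.
  - intros z z0. unfold Vf. cbv beta. rewrite (cA_sc aM aN 1 _ 0), (cA_sc aM aN (-1) _ 0) by ring. simpl (_ ^ 0).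
    field. auto.
Qed.

Lemma Af_eq N M s z : Af N M s z = N (1 - s * z) (mf M z).
Proof. unfold Af, uf, vf. f_equal; field. Qed.

Lemma sseq_0 aM aN : aN 0%nat = 1 -> sseq aM aN 0 = 1.
Proof. intros H. unfold sseq, inner. simpl. rewrite H. unfold P. simpl. field. Qed.

Lemma dseq_0 aM aN : aN 0%nat = 1 -> dseq aM aN 0 = / 2.
Proof.
  intros H. unfold dseq, inner. simpl sum_f_R0. rewrite H.
  replace (2 * 0 + 1 - 2 * 0)%nat with 1%nat by lia. simpl sum_f_R0.
  rewrite !P_zero_r by (unfold gseq; lra). rewrite !P_one_r by (unfold hseq; lra).
  simpl. field.
Qed.

Lemma mean_pos X p q : is_mean X -> 0 < p -> 0 < q -> 0 < X p q.
Proof.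
  intros Hm Hp Hq. destruct (Hm p q Hp Hq) as [H _].
  eapply Rlt_le_trans; [|exact H]. unfold Rmin; destruct (Rle_dec p q); lra.
Qed.

Definition cW aM aN j L := conv (mono (2 * j)) (conv (fun k => P k (2 * Z.of_nat j) (spr (dseq aM aN)))
                                              (fun k => P k (1 - 2 * Z.of_nat j) (spr (sseq aM aN)))) L.

Lemma main_coef M N K aM aN aK m :
  is_mean M -> is_symmetric M -> is_homogeneous M -> has_sym_asymp_exp M aM ->
  is_mean N -> is_symmetric N -> is_homogeneous N -> has_sym_asymp_exp N aN ->
  is_mean K -> is_symmetric K -> is_homogeneous K -> has_sym_asymp_exp K aK ->
  is_stabilizable K M N ->
  aN m = sum_f_R0 (fun j => aK j * cW aM aN j (2 * m)) (S (2 * m)).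
Proof.
  intros HmM HsM HhM HaM HmN HsN HhN HaN HmK HsK HhK HaK Hst.
  set (Om := S (2 * m)). set (n0 := (2 * m)%nat).
  assert (HaN0 : aN 0%nat = 1) by (apply (a0_one N); auto).
  pose proof (ex_U M N aM aN Om HmM HhM HaM HmN HsN HhN HaN) as HU.
  pose proof (ex_Vz M N aM aN n0 HmM HhM HaM HmN HsN HhN HaN) as HVz.
  destruct (ex_bound _ _ _ _ HVz) as [d1 [B [Hd1 HB]]].
  pose proof (proj1 (ex0 _ _ _) (ex_le _ _ _ 0 Om ltac:(lia) HU)) as HU0.
  destruct (HU0 (1/2) ltac:(lra)) as [d2 [Hd2 HU2]].
  unfold spr in HU2 at 1. simpl Nat.even in HU2. change (0 / 2)%nat with 0%nat in HU2.
  rewrite sseq_0 in HU2 by auto.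
  set (d0 := Rmin (1/2) (Rmin d1 d2)).
  assert (Hd0 : 0 < d0) by (unfold d0; repeat apply Rmin_pos; lra).
  assert (Hbd : forall z, 0 < z < d0 -> Rabs (Vf N M z) < Uf N M z /\ Rabs (Vf N M z) <= Rabs B * z /\
                   1/2 <= Uf N M z /\ Uf N M z <= 3/2).
  { intros z [z0 zd].
    assert (zh : z < 1/2) by (eapply Rlt_le_trans; [exact zd| apply Rmin_l]).
    assert (zd1 : Rabs z < d1) by (rewrite Rabs_pos_eq by lra; eapply Rlt_le_trans; [exact zd| eapply Rle_trans; [apply Rmin_r| apply Rmin_l]]).
    assert (zd2 : Rabs z < d2) by (rewrite Rabs_pos_eq by lra; eapply Rlt_le_trans; [exact zd| eapply Rle_trans; [apply Rmin_r| apply Rmin_r]]).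
    assert (zn : z <> 0) by lra.
    specialize (HB z z0 zn zd1). specialize (HU2 z z0 zn zd2).
    pose proof (mf_bound M z HmM (conj z0 (ltac:(lra) : z < 1))).
    assert (A1p : 0 < Af N M 1 z) by (rewrite Af_eq; apply mean_pos; auto; lra).
    assert (A2p : 0 < Af N M (-1) z) by (rewrite Af_eq; apply mean_pos; auto; lra).
    repeat split.
    - apply Rabs_def1; unfold Uf, Vf; lra.
    - replace (Vf N M z) with (Vf N M z / z * z) by (field; auto). rewrite Rabs_mult, (Rabs_pos_eq z) by lra.
      apply Rmult_le_compat_r; [lra|]. pose proof (Rle_abs B); lra.
    - pose proof (Rle_abs (- (Uf N M z - 1))). rewrite Rabs_Ropp in H0. lra.
    - pose proof (Rle_abs (Uf N M z - 1)). lra. }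
  pose proof (comp K aK (Uf N M) (Vf N M) (Rabs B) (1/2) (3/2) d0 Om HmK HsK HhK HaK Hd0 ltac:(lra) (Rabs_pos B) Hbd) as HC.
  assert (Hd0s : dseq aM aN 0 <> 0) by (rewrite dseq_0; auto; lra).
  assert (Hs0s : sseq aM aN 0 <> 0) by (rewrite sseq_0; auto; lra).
  assert (HW : forall j, (j <= Om)%nat -> ex posz (fun z => aK j * Vf N M z ^ (2 * j) * powerRZ (Uf N M z) (1 - 2 * Z.of_nat j))
                 (fun L => aK j * cW aM aN j L) n0).
  { intros j _.
    pose proof (ex_pow _ _ _ n0 (2 * Z.of_nat j) HVz Hd0s) as H1.
    pose proof (ex_pow _ _ _ n0 (1 - 2 * Z.of_nat j) (ex_le _ _ _ n0 Om ltac:(unfold Om, n0; lia) HU) Hs0s) as H2.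
    pose proof (ex_scal _ _ _ (aK j) _ (ex_mult _ _ _ _ _ _ (ex_monomial posz (2 * j) n0) (ex_mult _ _ _ _ _ _ H1 H2))) as H3.
    eapply ex_ext_all; [| exact H3]. intros z z0. cbv beta. rewrite powerRZ_2j.
    replace (Vf N M z ^ (2 * j)) with ((Vf N M z / z * z) ^ (2 * j)) by (f_equal; field; auto).
    rewrite Rpow_mult_distr. ring. }
  pose proof (ex_sum _ _ _ Om n0 HW) as HS.
  pose proof (ex_plus _ _ _ _ _ _ (ex_le _ _ _ n0 (2 * Om) ltac:(unfold Om, n0; lia) HC) HS) as HK.
  pose proof (ex_f N aN HmN HhN HaN n0) as HF.
  assert (HK' : ex posz (fun z => N (1 - z) (1 + z)) (fun k => 0 + sum_f_R0 (fun j => aK j * cW aM aN j k) Om) n0).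
  { eapply ex_ext; [| exact HK]. exists (1/2). split; [lra|]. intros z z0 zn zd. unfold posz in z0.
    rewrite Rabs_pos_eq in zd by lra. cbv beta.
    replace (Uf N M z - Vf N M z) with (Af N M 1 z) by (unfold Uf, Vf; field).
    replace (Uf N M z + Vf N M z) with (Af N M (-1) z) by (unfold Uf, Vf; field).
    rewrite !Af_eq. replace (1 - 1 * z) with (1 - z) by ring. replace (1 - -1 * z) with (1 + z) by ring.
    pose proof (mf_bound M z HmM (conj z0 (ltac:(lra) : z < 1))).
    rewrite (HsN (1 + z)) by lra. rewrite (Hst (1 - z) (1 + z)) by lra. unfold mf. ring. }
  pose proof (ex_unique _ _ _ _ n0 (fun d Hd => ex_intro _ (d/2) (conj (ltac:(unfold posz; lra) : posz (d/2)) (conj (ltac:(lra) : d/2 <> 0) (ltac:(rewrite Rabs_pos_eq; lra) : Rabs (d/2) < d)))) HF HK' n0 (le_n _)) as E.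
  unfold n0 in E. rewrite spr_even in E. rewrite E. unfold n0. ring.
Qed.


Lemma cst1_mono0 k : cst 1 k = mono 0 k.
Proof. destruct k; reflexivity. Qed.

Lemma cW_eval aM aN j m : aN 0%nat = 1 -> (j <= m)%nat ->
  cW aM aN j (2 * m) = conv (fun k => P k (2 * Z.of_nat j) (dseq aM aN))
                            (fun k => P k (1 - 2 * Z.of_nat j) (sseq aM aN)) (m - j).
Proof.
  intros H0 Hj. unfold cW. rewrite conv_mono.
  replace (Nat.leb (2 * j) (2 * m)) with true by (symmetry; apply Nat.leb_le; lia).
  assert (Hd : dseq aM aN 0 <> 0) by (rewrite dseq_0; auto; lra).
  assert (Hs : sseq aM aN 0 <> 0) by (rewrite sseq_0; auto; lra).
  rewrite (conv_ext_l _ (spr (fun k => P k (2 * Z.of_nat j) (dseq aM aN)))) by (intros; apply P_spr; auto).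
  rewrite (conv_ext_r _ _ (spr (fun k => P k (1 - 2 * Z.of_nat j) (sseq aM aN)))) by (intros; apply P_spr; auto).
  rewrite conv_spr. replace (2 * m - 2 * j)%nat with (2 * (m - j))%nat by lia. apply spr_even.
Qed.

Lemma final_sum aM aN aK m : (1 <= m)%nat -> aK 0%nat = 1 -> aN 0%nat = 1 ->
  sum_f_R0 (fun j => aK j * cW aM aN j (2 * m)) (S (2 * m)) =
  sseq aM aN m + sum_f_R0 (fun j => aK (S j) *
             sum_f_R0 (fun k => P k (2 * Z.of_nat (S j))%Z (dseq aM aN)
                         * P (m - S j - k) (1 - 2 * Z.of_nat (S j))%Z (sseq aM aN))
                      (m - S j)) (m - 1).
Proof.
  intros Hm HK0 HN0.
  rewrite (sum_trunc _ (S (2 * m)) m) by (try lia; intros j Hj; unfold cW; rewrite conv_mono;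
     replace (Nat.leb (2 * j) (2 * m)) with false by (symmetry; apply Nat.leb_gt; lia); ring).
  rewrite decomp_sum by lia. replace (Init.Nat.pred m) with (m - 1)%nat by lia.
  f_equal.
  - rewrite cW_eval by (auto; lia). rewrite HK0, Rmult_1_l.
    assert (Hs : sseq aM aN 0 <> 0) by (rewrite sseq_0; auto; lra).
    assert (Hd : dseq aM aN 0 <> 0) by (rewrite dseq_0; auto; lra).
    rewrite (conv_ext_l _ (mono 0)) by (intros; simpl (2 * Z.of_nat 0)%Z; rewrite P_zero_r, cst1_mono0; auto).
    rewrite (conv_ext_r _ _ (sseq aM aN)) by (intros; simpl (1 - 2 * Z.of_nat 0)%Z; rewrite P_one_r; auto).
    rewrite conv_mono. simpl. f_equal. lia.
  - apply sum_eq. intros i Hi. rewrite cW_eval by (auto; lia). reflexivity.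
Qed.

Lemma sseq_split aM aN m : sseq aM aN (S m) = / 2 * inner aM aN m (2 * S m) + aN (S m) * / 2 ^ (2 * S m).
Proof.
  unfold sseq. unfold inner at 1. rewrite tech5. fold (inner aM aN m (2 * S m)).
  rewrite Nat.sub_diag. cbn [sum_f_R0]. rewrite Nat.sub_diag. change (0 - 0)%nat with 0%nat. rewrite !P_0.
  change (gseq aM 0%nat) with 1. change (hseq aM 0%nat) with 2. rewrite powerRZ_R1. rewrite powerRZ_1m2 by lra. field. apply pow_nonzero; lra.
Qed.

Theorem theorem3p5 (M N K : R -> R -> R) (aM aN aK : nat -> R) :
  is_mean M -> is_symmetric M -> is_homogeneous M -> has_sym_asymp_exp M aM ->
  is_mean N -> is_symmetric N -> is_homogeneous N -> has_sym_asymp_exp N aN ->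
  is_mean K -> is_symmetric K -> is_homogeneous K -> has_sym_asymp_exp K aK ->
  is_stable K -> is_stable M -> is_stabilizable K M N ->
  aN 0%nat = 1 /\
  (forall m : nat, (1 <= m)%nat ->
     aN m = 2 ^ (2 * m) / (2 ^ (2 * m) - 1) *
       ( / 2 * inner aM aN (m - 1) (2 * m)
         + sum_f_R0 (fun j => aK (S j) *
             sum_f_R0 (fun k => P k (2 * Z.of_nat (S j))%Z (dseq aM aN)
                         * P (m - S j - k) (1 - 2 * Z.of_nat (S j))%Z (sseq aM aN))
                      (m - S j)) (m - 1))) /\
  aN 1%nat = / 3 * (aK 1%nat + 2 * aM 1%nat).
Proof.
  intros HmM HsM HhM HaM HmN HsN HhN HaN HmK HsK HhK HaK _ _ Hst.
  assert (HN0 : aN 0%nat = 1) by (apply (a0_one N); auto).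
  assert (HK0 : aK 0%nat = 1) by (apply (a0_one K); auto).
  assert (HM0 : aM 0%nat = 1) by (apply (a0_one M); auto).
  assert (Hgen : forall m : nat, (1 <= m)%nat ->
     aN m = 2 ^ (2 * m) / (2 ^ (2 * m) - 1) *
       ( / 2 * inner aM aN (m - 1) (2 * m)
         + sum_f_R0 (fun j => aK (S j) *
             sum_f_R0 (fun k => P k (2 * Z.of_nat (S j))%Z (dseq aM aN)
                         * P (m - S j - k) (1 - 2 * Z.of_nat (S j))%Z (sseq aM aN))
                      (m - S j)) (m - 1))).
  { intros m Hm.
    pose proof (main_coef M N K aM aN aK m HmM HsM HhM HaM HmN HsN HhN HaN HmK HsK HhK HaK Hst) as E.
    rewrite final_sum in E by auto.
    destruct m as [|m']; [lia|].
    rewrite sseq_split in E. replace (S m' - 1)%nat with m' by lia.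
    replace (S m' - 1)%nat with m' in E by lia.
    assert (H1 : 1 < 2 ^ (2 * S m')) by (apply Rlt_pow_R1; lra || lia).
    set (S2 := sum_f_R0 _ m') in *.
    set (I := inner aM aN m' (2 * S m')) in *.
    set (Q := 2 ^ (2 * S m')) in *.
    apply Rmult_eq_reg_r with ((Q - 1) / Q).
    2: { apply Rmult_integral_contrapositive; split; [lra|]. apply Rinv_neq_0_compat; lra. }
    field_simplify; [|lra|lra]. rewrite E at 1. field. lra. }
  split; auto. split; auto.
  rewrite (Hgen 1%nat) by lia. simpl (1 - 1)%nat. simpl (2 * 1)%nat.
  unfold inner at 1. simpl sum_f_R0.
  rewrite !P_zero_r by (unfold gseq; lra). rewrite P_one_r by (unfold hseq; lra).
  rewrite !P_0. rewrite dseq_0, sseq_0 by auto. unfold cst. rewrite HN0.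
  unfold hseq. simpl. field.
Qed.
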